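(* Let $p$ be an odd prime and let $(G,H,T)$ be the envelope of a right conjugacy closed loop of order $2p$. Let $K$ be a subgroup with $H\lneq K\lneq G$, $|G:K|=2$ and $|K:H|=p$, and put $K_1=\langle T\cap K\rangle$, $H_1=H\cap K_1$. Then $|H_1|\in\{1,p\}$ and $K_1$ is elementary abelian of order $p$ or $p^2$.
   Context: For a finite loop $\mathcal{L}$ with identity $e$: $G=\langle R_a\mid a\in\mathcal L\rangle$ with $R_a\colon x\mapsto xa$, $H$ the stabilizer of $e$ in $G$, $T=\{R_a\}$; $(G,H,T)$ is the envelope; the loop is right conjugacy closed if $T$ is a union of conjugacy classes of $G$. *)

(* Defs.v *)
From mathcomp Require Import all_boot all_fingroup all_solvable.
Set Implicit Arguments. Unset Strict Implicit. Unset Printing Implicit Defensive.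
Import GroupScope.

(* A finite loop (L, op) with identity e: two-sided identity and unique
   left/right division (on a finite set, injectivity of the translations is
   equivalent to bijectivity). *)
Definition is_loop (L : finType) (op : L -> L -> L) (e : L) : Prop :=
  [/\ forall x, op e x = x /\ op x e = x,
      forall a, injective (op a)
    & forall a, injective (fun x => op x a)].

Definition rmult_set (L : finType) (op : L -> L -> L) : {set {perm L}} :=
  [set s : {perm L} | [exists a : L, [forall x : L, s x == op x a]]].

Definition env_group (L : finType) (op : L -> L -> L) : {group {perm L}} :=
  <<rmult_set op>>%G.

Definition env_stab (L : finType) (op : L -> L -> L) (e : L) : {group {perm L}} :=
  ('C_(env_group op)[e | 'P])%G.

Definition rcc (L : finType) (op : L -> L -> L) : Prop :=
  forall t, t \in rmult_set op -> t ^: env_group op \subset rmult_set op.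

(* Main.v *)
Require Import Defs.
From mathcomp Require Import all_boot all_fingroup all_solvable.
From mathcomp Require Import zify.
Import GroupScope.
Set Implicit Arguments. Unset Strict Implicit. Unset Printing Implicit Defensive.

Section B.
Variable (aT : finType).

Lemma perm_on_Sym (O : {set aT}) s : (s \in perm.Sym O) = perm_on O s.
Proof. by rewrite inE. Qed.

Lemma cycle_trans (O : {set aT}) (c : {perm aT}) p y :
  prime p -> #|O| = p -> perm_on O c -> #[c] = p -> c y != y ->
  orbit 'P <[c]> y = O.
Proof.
move=> pp cO onc oc cy.
have yO : y \in O by apply: contraR cy => /(out_perm onc) ->.
have sub : orbit 'P <[c]> y \subset O.
  apply/subsetP=> z /orbitP [h hc <-] /=.
  have : h \in perm.Sym O by apply: (subsetP _ h hc); rewrite cycle_subG perm_on_Sym.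
  by rewrite perm_on_Sym => /perm_closed ->.
apply/eqP; rewrite eqEcard sub cO.
have dv : #|orbit 'P <[c]> y| %| p.
  by rewrite card_orbit -oc /order dvdn_indexg.
have ge2 : 1 < #|orbit 'P <[c]> y|.
  have : [set y; c y] \subset orbit 'P <[c]> y.
    apply/subsetP=> z; rewrite !inE => /orP [] /eqP ->; first exact: orbit_refl.
    by apply/orbitP; exists c; rewrite ?cycle_id.
  by move/subset_leq_card; rewrite cards2 eq_sym (negbTE cy).
have ne1 : #|orbit 'P <[c]> y| != 1%N by rewrite neq_ltn ge2 orbT.
have := elimT (prime_nt_dvdP pp ne1) dv. by move=> ->; rewrite leqnn.
Qed.

Lemma cycle_sub_Sym (O : {set aT}) (c : {perm aT}) :
  perm_on O c -> <[c]> \subset perm.Sym O.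
Proof. by move=> onc; rewrite cycle_subG inE. Qed.

Lemma cent_cycle_on (O : {set aT}) (c g : {perm aT}) p y :
  prime p -> #|O| = p -> perm_on O c -> perm_on O g -> #[c] = p -> c y != y ->
  commute g c -> g \in <[c]>.
Proof.
move=> pp cO onc ong oc cy gc.
have Oy := cycle_trans pp cO onc oc cy.
have yO : y \in O by rewrite -Oy orbit_refl.
have gyO : g y \in O by rewrite (perm_closed _ ong).
rewrite -Oy in gyO; case/orbitP: gyO => h hc /= hy.
have onh : perm_on O h by have := subsetP (cycle_sub_Sym onc) h hc; rewrite inE.
have kc : commute (g * h^-1) c.
  apply: commute_sym; apply: commuteM; first exact: commute_sym.
  apply: commuteV; case/cycleP: hc => i ->; exact/commuteX/commute_refl.
have k1 : g * h^-1 = 1.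
  apply/permP=> z; rewrite perm1.
  have [zO|zNO] := boolP (z \in O); last first.
    by rewrite (out_perm _ zNO) // perm_onM // perm_onV.
  rewrite -Oy in zO; case/orbitP: zO => h' hc' /= <-.
  have kh' : commute (g * h^-1) h'.
    by case/cycleP: hc' => i ->; exact: commuteX.
  rewrite -permM -kh' permM; congr (h' _).
  by rewrite permM -hy -permM mulgV perm1.
by move/eqP: k1; rewrite -eq_mulgV1 => /eqP ->.
Qed.

Lemma moved (s : {perm aT}) : s != 1 -> exists y, s y != y.
Proof.
move=> s1; apply/existsP; apply: contraR s1 => /existsPn H.
by apply/eqP/permP=> z; rewrite perm1; apply/eqP; move/negPn: (H z).
Qed.

Section C.
Variables (O : {set aT}) (p : nat) (X : {group {perm aT}}) (S : {set {perm aT}}).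
Hypotheses (pp : prime p) (cO : #|O| = p) (XO : X \subset perm.Sym O)
  (pX : p %| #|X|) (SX : S \subset X) (S1 : 1 \in S) (Sp : #|S| <= p)
  (SJ : forall s x, s \in S -> x \in X -> s ^ x \in S).

Lemma onX x : x \in X -> perm_on O x.
Proof. by move/(subsetP XO); rewrite inE. Qed.

Lemma lemC s : s \in S -> s != 1 ->
  [/\ <[s]>%G \in 'Syl_p(X), #|'Syl_p(X)| = 1%N & #[s] = p].
Proof.
move=> sS s1.
have sX : s \in X by exact: (subsetP SX).
have clsub : s ^: X \subset S :\ 1.
  apply/subsetP=> z /imsetP [x xX ->]; rewrite !inE SJ // andbT.
  by apply: contra s1 => /eqP /(congr1 (fun t => t ^ x^-1)); rewrite conjgK conj1g => ->.
have mlt : #|s ^: X| < p.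
  have := subset_leq_card clsub; have := cardsD1 1 S; rewrite S1 add1n => h1 h2; have := Sp; rewrite h1; exact: leq_ltn_trans h2.
have m0 : 0 < #|s ^: X| by apply/card_gt0P; exists s; exact: class_refl.
have pm : ~~ (p %| #|s ^: X|) by rewrite gtnNdvd.
have pC : p %| #|'C_X[s]|.
  have := Lagrange (subsetIl X 'C[s]); rewrite index_cent1 => HL.
  by move: pX; rewrite -HL Euclid_dvdM // (negbTE pm) orbF.
have [c cC oc] := Cauchy pp pC.
have cX : c \in X by case/setIP: cC.
have c1 : c != 1.
  by apply/eqP=> c1; move: oc (prime_gt1 pp); rewrite c1 order1 => <-.
have [y cy] := moved c1.
have onc := onX cX.
have ons := onX sX.
have sc : s \in <[c]>.
  apply: (cent_cycle_on pp cO onc ons oc cy).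
  by case/setIP: cC => _ /cent1P /commute_sym.
have os : #[s] = p.
  have : #[s] %| p by rewrite -oc; apply: cardSg; rewrite cycle_subG.
  case/primeP: pp => _ H /H /orP [|/eqP //]. by rewrite order_eq1 (negbTE s1).
have [y' sy'] := moved s1.
have CQ : 'C_X[s] = <[s]>.
  apply/eqP; rewrite eqEsubset; apply/andP; split.
    apply/subsetP=> g /setIP [gX /cent1P gs].
    exact: (cent_cycle_on pp cO ons (onX gX) os sy' gs).
  by rewrite subsetI cycle_subG sX /= cycle_subG cent1id.
have syl : p.-Sylow(X) <[s]>.
  rewrite /pHall cycle_subG sX /= -CQ index_cent1 p'natE // pm andbT.
  by rewrite CQ /pgroup -orderE os pnat_id.
split; [by rewrite inE | | exact: os].
have hN : #|X : 'N_X(<[s]>)| %| #|X : <[s]>|.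
  by apply: indexgS; rewrite subsetI cycle_subG sX normG.
have hm0 : #|X : <[s]>| = #|s ^: X| by rewrite -CQ index_cent1.
rewrite hm0 in hN.
have hm := card_Syl_mod X pp.
rewrite (card_Syl syl) in hm *.
have := dvdn_leq m0 hN => hle.
by rewrite modn_small in hm => //; apply: leq_ltn_trans hle mlt.
Qed.

Lemma lemD s1 : s1 \in S -> s1 != 1 -> S \subset <[s1]>.
Proof.
move=> s1S s11; have [syl1 c1 _] := lemC s1S s11.
apply/subsetP=> s sS; have [->|s_1] := eqVneq s 1; first exact: group1.
have [syl _ _] := lemC sS s_1.
have : #|'Syl_p(X)| <= 1 by rewrite c1.
move/card_le1_eqP => /(_ _ _ syl syl1) eq.
by have := cycle_id s; move: (congr1 val eq) => /= ->.
Qed.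
End C.

Lemma lemE (O : {set aT}) (K : {group {perm aT}}) (S : {set {perm aT}}) p x :
  prime p -> O = orbit 'P K x -> #|O| = p -> S \subset K -> 1 \in S ->
  #|S| <= p -> (forall s k, s \in S -> k \in K -> s ^ k \in S) ->
  (forall s z, s \in S -> s != 1 -> s z != z) -> (exists2 s, s \in S & s != 1) ->
  exists c : {perm aT}, #[c] = p /\ forall g, g \in <<S>> -> restr_perm O g \in <[c]>.
Proof.
move=> pp dO cO SK S1 Sp SJ fpf [s1 s1S s11].
have KN : K \subset 'N(O | 'P) by rewrite dO; apply: acts_orbit; exact: subsetT.
have xO : x \in O by rewrite dO orbit_refl.
set r := restr_perm O.
have SN : S \subset 'N(O | 'P) := subset_trans SK KN.
set X := (r @* K)%G.
have XO : X \subset perm.Sym O.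
  by apply/subsetP=> y /morphimP [k _ _ ->]; rewrite inE restr_perm_on.
have pX : p %| #|X|.
  have eO : orbit 'P X x = O.
    apply/setP=> y; apply/idP/idP.
      case/orbitP=> g /morphimP [k kN kK ->] /= <-.
      rewrite /aperm /r restr_permE //.
      by have := mem_orbit 'P x kK; rewrite -dO.
    move=> yO; have := yO; rewrite {1}dO => /orbitP [k kK /= ky]; apply/orbitP; exists (r k).
      exact: mem_morphim (subsetP KN k kK) kK.
    by rewrite /= apermE restr_permE ?(subsetP KN k kK) // -ky apermE.
  by rewrite -cO -eO card_orbit dvdn_indexg.
have SX : r @: S \subset X.
  apply/subsetP=> y /imsetP [s sS ->]; apply: mem_morphim; last exact: (subsetP SK).
  exact: (subsetP SN).
have S1' : 1 \in r @: S by apply/imsetP; exists 1 => //; rewrite /r morph1.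
have Sp' : #|r @: S| <= p by apply: leq_trans (leq_imset_card _ _) Sp.
have SJ' : forall s y, s \in r @: S -> y \in X -> s ^ y \in r @: S.
  move=> _ _ /imsetP [s sS ->] /morphimP [k kN kK ->].
  rewrite -morphJ //; last exact: (subsetP SN).
  by apply/imsetP; exists (s ^ k) => //; apply: SJ.
have r11 : r s1 != 1.
  apply/eqP=> h; move: (fpf s1 x s1S s11); rewrite -(restr_permE (subsetP SN _ s1S) xO).
  by rewrite -/r h perm1 eqxx.
have r1S : r s1 \in r @: S by apply: imset_f.
have [_ _ oc] := lemC pp cO XO pX SX S1' Sp' SJ' r1S r11.
have sub := lemD pp cO XO pX SX S1' Sp' SJ' r1S r11.
exists (r s1); split => // g gS.
have : <<S>> \subset r @*^-1 <[r s1]>.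
  rewrite gen_subG; apply/subsetP=> s sS; apply: mem_morphpre; first exact: (subsetP SN).
  by apply: (subsetP sub); apply: imset_f.
by move/subsetP/(_ g gS) => /morphpreP [].
Qed.
End B.

Section Loop.
Variables (L : finType) (op : L -> L -> L) (e : L).
Hypothesis hl : is_loop op e.

Lemma rinj a : injective (fun x => op x a).
Proof. by case: hl. Qed.
Lemma linj a : injective (op a).
Proof. by case: hl. Qed.
Lemma opxe x : op x e = x.
Proof. by case: hl => h _ _; case: (h x). Qed.
Lemma opex x : op e x = x.
Proof. by case: hl => h _ _; case: (h x). Qed.

Definition Rp a : {perm L} := perm (@rinj a).
Lemma RpE a x : Rp a x = op x a.
Proof. by rewrite permE. Qed.

Lemma RpT a : Rp a \in rmult_set op.
Proof. by rewrite inE; apply/existsP; exists a; apply/forallP=> x; rewrite RpE. Qed.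

Lemma T_E t : t \in rmult_set op -> forall x, t x = op x (t e).
Proof.
rewrite inE => /existsP [a /forallP H] x.
by rewrite (eqP (H x)) (eqP (H e)) opex.
Qed.

Lemma T_eq t1 t2 : t1 \in rmult_set op -> t2 \in rmult_set op -> t1 e = t2 e -> t1 = t2.
Proof. by move=> h1 h2 h; apply/permP=> x; rewrite (T_E h1) (T_E h2) h. Qed.

Lemma T1 : 1 \in rmult_set op.
Proof. by rewrite inE; apply/existsP; exists e; apply/forallP=> x; rewrite perm1 opxe. Qed.

Lemma T_fpf t z : t \in rmult_set op -> t != 1 -> t z != z.
Proof.
move=> tT t1; apply: contra t1 => /eqP h.
have te : t e = e.
  apply: (@linj z); rewrite -(T_E tT) h opxe //.
by apply/eqP/permP=> x; rewrite (T_E tT) te opxe perm1.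
Qed.

Lemma TG : rmult_set op \subset env_group op.
Proof. exact: subset_gen. Qed.

End Loop.

Lemma cyc_comm (gT : finGroupType) (c x y : gT) :
  x \in <[c]> -> y \in <[c]> -> commute x y.
Proof. by case/cycleP=> i -> /cycleP [j ->]; apply: commuteX2. Qed.

Theorem corollary5p3 (p : nat) (L : finType) (op : L -> L -> L) (e : L) :
  prime p -> odd p ->
  is_loop op e -> #|L| = (2 * p)%N -> rcc op ->
  forall K : {group {perm L}},
    env_stab op e \proper K -> K \proper env_group op ->
    #|env_group op : K| = 2 -> #|K : env_stab op e| = p ->
    let K1 := <<rmult_set op :&: K>> in
    let H1 := env_stab op e :&: K1 in
    (#|H1| = 1%N \/ #|H1| = p) /\
    p.-abelem K1 /\ (#|K1| = p \/ #|K1| = (p ^ 2)%N).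
Proof.
move=> pp podd hl cL hrcc K HK KG iGK iKH K1 H1.
have KsG : K \subset env_group op := proper_sub KG.
have HsK : env_stab op e \subset K := proper_sub HK.
have nKG : K <| env_group op := index2_normal KsG iGK.
have p1 : 1 < p := prime_gt1 pp.
have CK : 'C_K[e | 'P] = env_stab op e.
  apply/setP=> x; apply/idP/idP.
    case/setIP=> xK xC; apply/setIP; split => //; exact: (subsetP KsG).
  move=> xH; have xK := subsetP HsK x xH; case/setIP: xH => _ xC; exact/setIP.
set O1 := orbit 'P K e.
have cO1 : #|O1| = p by rewrite /O1 card_orbit CK.
have RpK : forall a, a \in O1 -> Rp hl a \in K.
  move=> a /orbitP [k kK /= ka].
  have hG : Rp hl a * k^-1 \in env_stab op e.
    apply/setIP; split.
      apply: groupM; first exact: (subsetP (TG op) _ (RpT hl a)).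
      by rewrite groupV (subsetP KsG k kK).
    by apply/astab1P; rewrite /= apermE permM RpE (opex hl) -ka apermE -permM mulgV perm1.
  by have := groupM (subsetP HsK _ hG) kK; rewrite -mulgA mulVg mulg1.
set S := rmult_set op :&: K.
have SK : S \subset K := subsetIr _ K.
have S1 : 1 \in S by rewrite inE (T1 hl) group1.
have Sp : #|S| <= p.
  rewrite -cO1 -(card_in_imset (f := fun t : {perm L} => t e)).
    apply: subset_leq_card; apply/subsetP => _ /imsetP [t /setIP [_ tK] ->].
    exact: (mem_orbit 'P e tK).
  by move=> t1 t2 /setIP [h1 _] /setIP [h2 _]; apply: (T_eq hl).
have SJ : forall s k, s \in S -> k \in K -> s ^ k \in S.
  move=> s k /setIP [sT sK] kK; rewrite inE groupJ // andbT.
  by apply: (subsetP (hrcc s sT)); apply: memJ_class (subsetP KsG k kK).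
have fpf : forall s z, s \in S -> s != 1 -> s z != z.
  by move=> s z /setIP [sT _]; apply: (T_fpf hl).
have [a aO ae] : exists2 a, a \in O1 & a != e.
  have : ~~ (O1 \subset [set e]).
    by apply/negP=> /subset_leq_card; rewrite cards1 cO1 leqNgt p1.
  by case/subsetPn=> a aO; rewrite inE => ae; exists a.
have ns : exists2 s, s \in S & s != 1.
  exists (Rp hl a); first by rewrite inE (RpT hl) RpK.
  apply/eqP=> h; move/eqP: ae; apply.
  by rewrite -{1}(opex hl a) -(RpE hl) h perm1.
have [y _ yN] : exists2 y, y \in [set: L] & y \notin O1.
  apply/subsetPn; apply/negP=> /subset_leq_card; rewrite cardsT cL cO1 => h.
  by have := leq_trans (ltn_Pmull (isT : 1 < 2) (prime_gt0 pp)) h; rewrite ltnn.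
set O2 := orbit 'P K y.
have O2sub : O2 \subset ~: O1.
  apply/subsetP=> z zO2; rewrite inE; apply/negP=> zO1; move/negP: yN; apply.
  by move: zO1; rewrite /O1 (orbit_transl _ zO2).
have cC : #|~: O1| = p.
  by apply/eqP; have := cardsC O1; rewrite cO1 cL mul2n -addnn => /eqP; rewrite eqn_add2l.
have cO2 : #|O2| = p.
  apply/eqP; rewrite eqn_leq -{1}cC (subset_leq_card O2sub) /=.
  set g := Rp hl y.
  have gy : g e = y by rewrite /g RpE (opex hl).
  have gG : g \in env_group op := subsetP (TG op) _ (RpT hl y).
  have : [set g z | z in O1] \subset O2.
    apply/subsetP => _ /imsetP [z /orbitP [k kK /= <-] ->].
    have kg : k ^ g \in K by rewrite memJ_norm // (subsetP (normal_norm nKG)).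
    apply/orbitP; exists (k ^ g) => //=.
    by rewrite !apermE -gy conjgE !permM permK.
  by move/subset_leq_card; rewrite card_imset ?cO1 //; apply: perm_inj.
have O2C : O2 = ~: O1 by apply/eqP; rewrite eqEcard O2sub cO2 cC leqnn.
have [c1 [oc1 h1]] := lemE pp (erefl O1) cO1 SK S1 Sp SJ fpf ns.
have [c2 [oc2 h2]] := lemE pp (erefl O2) cO2 SK S1 Sp SJ fpf ns.
have N1 : K \subset 'N(O1 | 'P) by apply: acts_orbit; exact: subsetT.
have N2 : K \subset 'N(O2 | 'P) by apply: acts_orbit; exact: subsetT.
have K1K : K1 \subset K by rewrite /K1 gen_subG.
have triv : forall g, g \in K -> restr_perm O1 g = 1 -> restr_perm O2 g = 1 -> g = 1.
  move=> g gK e1 e2; apply/permP=> z; rewrite perm1.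
  have [zO|zO] := boolP (z \in O1).
    by rewrite -(restr_permE (subsetP N1 g gK) zO) e1 perm1.
  have zO2 : z \in O2 by rewrite O2C inE zO.
  by rewrite -(restr_permE (subsetP N2 g gK) zO2) e2 perm1.
have inj : forall g h, g \in K -> h \in K ->
    restr_perm O1 g = restr_perm O1 h -> restr_perm O2 g = restr_perm O2 h -> g = h.
  move=> g h gK hK e1 e2; apply/eqP; rewrite eq_mulgV1; apply/eqP/triv.
  - by rewrite groupM ?groupV.
  - by rewrite morphM ?morphV ?groupV ?(subsetP N1) //= e1 mulgV.
  - by rewrite morphM ?morphV ?groupV ?(subsetP N2) //= e2 mulgV.
have comm : forall g h, g \in K1 -> h \in K1 -> commute g h.
  move=> g h gK1 hK1; have gK := subsetP K1K g gK1; have hK := subsetP K1K h hK1.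
  apply: inj; rewrite ?groupM // morphM ?(subsetP N1) ?(subsetP N2) // morphM
    ?(subsetP N1) ?(subsetP N2) //=.
  - exact: cyc_comm (h1 g gK1) (h1 h hK1).
  - exact: cyc_comm (h2 g gK1) (h2 h hK1).
have expp : forall g, g \in K1 -> g ^+ p = 1.
  move=> g gK1; have gK := subsetP K1K g gK1; apply: triv.
  - by rewrite groupX.
  - rewrite morphX ?(subsetP N1) //=.
    by have := expg_cardG (h1 g gK1); rewrite -orderE oc1.
  - rewrite morphX ?(subsetP N2) //=.
    by have := expg_cardG (h2 g gK1); rewrite -orderE oc2.
have ab : p.-abelem K1.
  apply/(abelemP (G := <<S>>%G) pp); split; last exact: expp.
  by apply/centsP=> g gK1 h hK1; apply: comm.
have oK1 : orbit 'P K1 e = O1.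
  apply/eqP; rewrite eqEsubset; apply/andP; split.
    by apply/subsetP => z /orbitP [k kK1 <-]; apply: mem_orbit (subsetP K1K k kK1).
  apply/subsetP => b bO; apply/orbitP; exists (Rp hl b).
    by rewrite mem_gen // inE (RpT hl) RpK.
  by rewrite /= apermE RpE (opex hl).
have CK1 : 'C_K1[e | 'P] = H1.
  apply/setP=> x; apply/idP/idP.
    case/setIP=> xK1 xC; apply/setIP; split => //; apply/setIP; split => //.
    exact: (subsetP KsG) (subsetP K1K x xK1).
  by case/setIP=> /setIP [_ xC] xK1; apply/setIP.
have cK1 : #|K1| = (p * #|H1|)%N.
  by rewrite -(card_orbit_stab 'P <<S>>%G e) /= oK1 CK1 cO1.
have le : #|K1| <= p * p.
  pose f := fun g : {perm L} => (restr_perm O1 g, restr_perm O2 g).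
  rewrite -(@card_in_imset _ _ f K1).
    have sub : f @: K1 \subset setX <[c1]> <[c2]>.
      by apply/subsetP=> _ /imsetP [g gK1 ->]; rewrite inE /= h1 // h2.
    by apply: leq_trans (subset_leq_card sub) _; rewrite cardsX -!orderE oc1 oc2.
  move=> g h gK1 hK1 [e1 e2]; apply: inj => //; exact: (subsetP K1K).
have pH1 : p.-group H1 by apply: pgroupS (subsetIr _ _) (abelem_pgroup ab).
have cH1 := card_pgroup pH1.
have H1p : #|H1| <= p.
  by move: le; rewrite cK1 leq_pmul2l // prime_gt0.
have lm : logn p #|H1| <= 1 by rewrite -(leq_exp2l _ _ p1) expn1 -cH1.
have [m0|m1] : logn p #|H1| = 0%N \/ logn p #|H1| = 1%N.
  by case: (logn p #|H1|) lm => [|[|n]] //; [left|right].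
- rewrite m0 expn0 in cH1; rewrite cH1 in cK1.
  by split; [left|split => //; left; rewrite cK1 muln1].
- rewrite m1 expn1 in cH1; rewrite cH1 in cK1.
  by split; [right|split => //; right; rewrite cK1 mulnn].
Qed.
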